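(* There is no sequence of maps $\varphi_0,\varphi_1,\varphi_2,\ldots$, each defined on the ideal $\mathcal{M}$ of meager subsets of $\mathbb{R}$ and taking values in the family of closed nowhere dense subsets of $\mathbb{R}$, such that both of the following hold: (a) $A\subseteq\bigcup_{i<\omega}\varphi_i(A)$ for every meager $A\subseteq\mathbb{R}$; (b) $\varphi_i(A)\subseteq\varphi_i(B)$ for all meager $A\subseteq B$ and all $i<\omega$. *)

(* Defs.v *)
From Stdlib Require Import Reals.
Open Scope R_scope.

Definition subset (A B : R -> Prop) : Prop := forall x, A x -> B x.

Definition is_open (U : R -> Prop) : Prop :=
  forall x, U x -> exists eps, 0 < eps /\ forall y, Rabs (y - x) < eps -> U y.

Definition is_closed (F : R -> Prop) : Prop := is_open (fun x => ~ F x).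

Definition closure (A : R -> Prop) : R -> Prop :=
  fun x => forall eps, 0 < eps -> exists y, A y /\ Rabs (y - x) < eps.

Definition nowhere_dense (A : R -> Prop) : Prop :=
  forall U, is_open U -> subset U (closure A) -> forall x, ~ U x.

Definition meager (A : R -> Prop) : Prop :=
  exists N : nat -> (R -> Prop),
    (forall n, nowhere_dense (N n)) /\ forall x, A x -> exists n, N n x.

(* Main.v *)
Require Import Defs.
From Stdlib Require Import Reals.
From Stdlib Require Import Lra Lia Classical ClassicalEpsilon Cantor.
Open Scope R_scope.

Lemma eps_eq (x z : R) : (forall eps, 0 < eps -> Rabs (x - z) < eps) -> x = z.
Proof.
  intros H. destruct (Req_dec x z) as [|Hn]; auto.
  assert (Hp : 0 < Rabs (x - z)) by (apply Rabs_pos_lt; lra).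
  specialize (H _ Hp). lra.
Qed.

Lemma single_nd (x : R) : nowhere_dense (fun y => y = x).
Proof.
  intros U HU Hsub y Uy.
  destruct (HU y Uy) as [e [He Hb]].
  assert (Hc : forall z, Rabs (z - y) < e -> x = z).
  { intros z Hz. apply eps_eq. intros eps Heps.
    destruct (Hsub z (Hb z Hz) eps Heps) as [w [Hw1 Hw2]]. subst w. exact Hw2. }
  assert (H1 : x = y) by (apply Hc; rewrite Rminus_diag, Rabs_R0; lra).
  assert (H2 : x = y + e/2) by (apply Hc; replace (y + e/2 - y) with (e/2) by ring;
                                 rewrite Rabs_right; lra).
  lra.
Qed.

Lemma countable_meager (f : nat -> R) (A : R -> Prop) :
  (forall y, A y -> exists n, y = f n) -> meager A.
Proof.
  intros H. exists (fun n => fun y => y = f n). split.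
  - intros n. apply single_nd.
  - intros x Hx. destruct (H x Hx) as [n Hn]. exists n. exact Hn.
Qed.

Lemma step_ex (G : R -> Prop) : nowhere_dense G -> forall a b, a < b ->
  exists a' b', a < a' /\ a' < b' /\ b' < b /\ forall z, a' <= z <= b' -> ~ G z.
Proof.
  intros HG a b Hab. apply NNPP. intro Hno.
  apply (HG (fun z => a < z < b)) with ((a+b)/2).
  - intros x Hx. exists (Rmin (x - a) (b - x)). split.
    + apply Rmin_glb_lt; lra.
    + intros y Hy. apply Rabs_def2 in Hy.
      assert (Rmin (x - a) (b - x) <= x - a) by apply Rmin_l.
      assert (Rmin (x - a) (b - x) <= b - x) by apply Rmin_r. lra.
  - intros z Hz eps Heps. apply NNPP. intro Hn. apply Hno.
    set (r := Rmin eps (Rmin (z - a) (b - z)) / 2).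
    assert (r1 : Rmin eps (Rmin (z - a) (b - z)) <= eps) by apply Rmin_l.
    assert (r2 : Rmin eps (Rmin (z - a) (b - z)) <= Rmin (z - a) (b - z)) by apply Rmin_r.
    assert (r3 : Rmin (z - a) (b - z) <= z - a) by apply Rmin_l.
    assert (r4 : Rmin (z - a) (b - z) <= b - z) by apply Rmin_r.
    assert (r5 : 0 < Rmin eps (Rmin (z - a) (b - z))).
    { apply Rmin_glb_lt; [lra|]. apply Rmin_glb_lt; lra. }
    exists (z - r), (z + r). unfold r. repeat split; try lra.
    intros w Hw Gw. apply Hn. exists w. split; auto.
    apply Rabs_def1; lra.
  - lra.
Qed.

Lemma baire (F : nat -> R -> Prop) :
  (forall n, nowhere_dense (F n)) -> exists x, forall n, ~ F n x.
Proof.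
  intros HF.
  pose (P := fun n (p q : R * R) => fst p < fst q /\ fst q < snd q /\ snd q < snd p /\
                 forall z, fst q <= z <= snd q -> ~ F n z).
  pose (st := fun n p => epsilon (inhabits (0,0)) (P n p)).
  assert (Hst : forall n p, fst p < snd p -> P n p (st n p)).
  { intros n p Hp. apply epsilon_spec.
    destruct (step_ex _ (HF n) _ _ Hp) as [a' [b' H]].
    exists (a', b'). exact H. }
  pose (s := fix s n := match n with 0%nat => st 0%nat (0,1) | S m => st (S m) (s m) end).
  assert (Hs : forall n, fst (s n) < snd (s n) /\
                 (forall z, fst (s n) <= z <= snd (s n) -> ~ F n z) /\
                 fst (s n) <= fst (s (S n)) /\ snd (s (S n)) <= snd (s n)).
  { assert (H0 : forall n, P n (match n with 0%nat => (0,1) | S m => s m end) (s n)).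
    { induction n.
      - apply Hst. simpl. lra.
      - change (s (S n)) with (st (S n) (s n)). apply Hst. destruct IHn as [? [? ?]]. exact H0. }
    intros n. destruct (H0 n) as [_ [h1 [_ h2]]]. destruct (H0 (S n)) as [h3 [_ [h4 _]]].
    repeat split; auto; lra. }
  assert (Ma : forall n m, (n <= m)%nat -> fst (s n) <= fst (s m)).
  { intros n m Hnm. induction Hnm; [lra|]. destruct (Hs m) as [_ [_ [? _]]]. lra. }
  assert (Mb : forall n m, (n <= m)%nat -> snd (s m) <= snd (s n)).
  { intros n m Hnm. induction Hnm; [lra|]. destruct (Hs m) as [_ [_ [_ ?]]]. lra. }
  assert (Hab : forall n m, fst (s n) <= snd (s m)).
  { intros n m. pose proof (Ma n (max n m) (Nat.le_max_l _ _)).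
    pose proof (Mb m (max n m) (Nat.le_max_r _ _)).
    destruct (Hs (max n m)) as [? _]. lra. }
  destruct (completeness (fun r => exists n, r = fst (s n))) as [x [Hub Hlub]].
  - exists (snd (s 0%nat)). intros r [n ->]. apply Hab.
  - exists (fst (s 0%nat)), 0%nat. reflexivity.
  - exists x. intros n. destruct (Hs n) as [_ [Hn _]]. apply Hn. split.
    + apply Hub. exists n. reflexivity.
    + apply Hlub. intros r [k ->]. apply Hab.
Qed.

Lemma basic (x e : R) : 0 < e -> exists (N : nat) (k : Z),
  Rabs (x - IZR k / INR N) < / INR N /\
  forall z, Rabs (z - IZR k / INR N) < / INR N -> Rabs (z - x) < e.
Proof.
  intros He. destruct (archimed_cor1 (e/2)) as [N [HN1 HN2]]; [lra|].
  assert (HNp : 0 < INR N) by (apply lt_0_INR; exact HN2).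
  assert (HiN : 0 < / INR N) by (apply Rinv_0_lt_compat; exact HNp).
  exists N, (up (x * INR N) - 1)%Z.
  destruct (archimed (x * INR N)) as [h1 h2].
  rewrite minus_IZR.
  set (u := IZR (up (x * INR N))) in *.
  assert (Heq : (u - 1) / INR N = x + (u - 1 - x * INR N) * / INR N) by (field; lra).
  rewrite Heq. split.
  - replace (x - (x + (u - 1 - x * INR N) * / INR N)) with ((x * INR N - (u - 1)) * / INR N) by ring.
    rewrite Rabs_right; [|apply Rle_ge; apply Rmult_le_pos; lra].
    rewrite <- (Rmult_1_l (/ INR N)) at 2. apply Rmult_lt_compat_r; lra.
  - intros z Hz.
    assert (Ht : Rabs ((u - 1 - x * INR N) * / INR N) < / INR N).
    { rewrite Rabs_mult, (Rabs_right (/ INR N)); [|lra].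
      rewrite <- (Rmult_1_l (/ INR N)) at 2. apply Rmult_lt_compat_r; [lra|].
      apply Rabs_def1; lra. }
    apply Rabs_def2 in Hz. apply Rabs_def2 in Ht. apply Rabs_def1; lra.
Qed.

Theorem mainTheorem2 :
  ~ exists phi : nat -> (R -> Prop) -> (R -> Prop),
      (forall i A, meager A -> is_closed (phi i A) /\ nowhere_dense (phi i A)) /\
      (forall A, meager A -> forall x, A x -> exists i, phi i A x) /\
      (forall i A B, meager A -> meager B -> subset A B ->
                     subset (phi i A) (phi i B)).
Proof.
  intros [phi [Hcl [Hcov Hmon]]].
  pose (X := fun i y => phi i (fun z => z = y) y).
  pose (B := fun (N : nat) (k : Z) y => Rabs (y - IZR k / INR N) < / INR N).
  pose (ch := fun i N k => epsilon (inhabits 0) (fun y => X i y /\ B N k y)).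
  pose (d := fun n => let (i, r) := Cantor.of_nat n in let (N, s) := Cantor.of_nat r in
                      let (a, b) := Cantor.of_nat s in ch i N (Z.of_nat a - Z.of_nat b)%Z).
  assert (Hd : forall i N k, exists n, d n = ch i N k).
  { intros i N k. exists (Cantor.to_nat (i, Cantor.to_nat (N, Cantor.to_nat (Z.to_nat k, Z.to_nat (-k))))).
    unfold d. rewrite !Cantor.cancel_of_to. f_equal. lia. }
  pose (A := fun y => exists n, y = d n).
  assert (HA : meager A) by (apply (countable_meager d); auto).
  assert (Hsing : forall y, meager (fun z => z = y)).
  { intros y. apply (countable_meager (fun _ => y)). intros z Hz. exists 0%nat. exact Hz. }
  assert (HX : forall i n, X i (d n) -> phi i A (d n)).
  { intros i n H. apply (Hmon i (fun z => z = d n) A (Hsing _) HA); auto.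
    intros z Hz. exists n. exact Hz. }
  assert (Hsub : forall i x, X i x -> phi i A x).
  { intros i x Hx. apply NNPP. intro Hn.
    destruct (Hcl i A HA) as [Hc _].
    destruct (Hc x Hn) as [eps [Heps Hball]].
    destruct (basic x eps Heps) as [N [k [Hk Hk2]]].
    assert (Hch : X i (ch i N k) /\ B N k (ch i N k)).
    { apply epsilon_spec. exists x. split; auto. }
    destruct (Hd i N k) as [n Hn2].
    destruct Hch as [Hc1 Hc2]. rewrite <- Hn2 in Hc1, Hc2.
    apply (Hball (d n)); auto. }
  destruct (baire (fun i => phi i A)) as [x Hx].
  { intros n. apply (Hcl n A HA). }
  destruct (Hcov (fun z => z = x) (Hsing x) x eq_refl) as [i Hi].
  apply (Hx i). apply Hsub. exact Hi.
Qed.
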